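(* Let $f_1$ and $g_1$ be smooth functions of one variable and consider the equation $$m_t+u_xf_1(u^2-u_x^2)\,m+\Big(\big(uf_1(u^2-u_x^2)+g_1(u^2-u_x^2)\big)m\Big)_x=0,\qquad m=u-u_{xx}.$$ No smooth solitary travelling wave solutions of this equation exist with arbitrary wave speed: for every constant $c\neq0$ with $c\neq g_1(0)$ there is no smooth solitary travelling wave solution with speed $c$. In particular, if $g_1(0)=0$, no smooth solitary travelling wave solutions exist (neither with arbitrary nor with a fixed wave speed).
   Context: A smooth solitary travelling wave solution with speed $c\neq0$ is a solution of the form $u=U(\xi)$, $\xi=x-ct$, with $U$ smooth and not identically zero, such that $U$ and its derivatives tend to zero as $|\xi|\to\infty$. *)

(* Defs.v *)
From Stdlib Require Import Reals.
From Coquelicot Require Import Coquelicot.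
Open Scope R_scope.

Definition smooth (f : R -> R) : Prop :=
  forall (n : nat) (x : R), ex_derive_n f n x.

Definition d_x (u : R -> R -> R) : R -> R -> R :=
  fun t x => Derive (fun y => u t y) x.
Definition d_t (u : R -> R -> R) : R -> R -> R :=
  fun t x => Derive (fun s => u s x) t.

Definition solves_eq (f1 g1 : R -> R) (u : R -> R -> R) : Prop :=
  let ux := d_x u in
  let m := fun t x => u t x - d_x ux t x in
  let w := fun t x => (u t x)^2 - (ux t x)^2 in
  forall t x : R,
    d_t m t x + ux t x * f1 (w t x) * m t x
    + d_x (fun t' y => (u t' y * f1 (w t' y) + g1 (w t' y)) * m t' y) t x = 0.

Definition smooth_solitary_tw (f1 g1 : R -> R) (c : R) (U : R -> R) : Prop :=
  smooth U /\
  (exists xi : R, U xi <> 0) /\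
  (forall n : nat,
      is_lim (Derive_n U n) p_infty 0 /\ is_lim (Derive_n U n) m_infty 0) /\
  solves_eq f1 g1 (fun t x => U (x - c * t)).

(* Main.v *)
Require Import Defs.
From Stdlib Require Import Reals Lra FunctionalExtensionality Classical.
From Coquelicot Require Import Coquelicot.
Open Scope R_scope.

Definition Anti (f : R -> R) (w : R) := RInt f 0 w.

Lemma deriv_approx f x l : is_derive f x l -> forall e, 0 < e -> exists d, 0 < d /\
  forall y, Rabs (y - x) < d -> Rabs (f y - f x - l * (y - x)) <= e * Rabs (y - x).
Proof.
  intros H e He. apply is_derive_Reals in H.
  destruct (H e He) as [d Hd]. exists d. split. apply cond_pos. intros y Hy.
  destruct (Req_dec y x) as [->|Hne].
  - replace (x - x) with 0 by ring. rewrite Rabs_R0. replace (f x - f x - l * 0) with 0 by ring.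
    rewrite Rabs_R0; lra.
  - assert (Hh : y - x <> 0) by lra.
    specialize (Hd (y - x) Hh Hy). replace (x + (y - x)) with y in Hd by ring.
    replace (f y - f x - l * (y - x)) with ((y - x) * ((f y - f x) / (y - x) - l)) by (field; auto).
    rewrite Rabs_mult. rewrite (Rmult_comm e). apply Rmult_le_compat_l. apply Rabs_pos. lra.
Qed.

Lemma is_derive_cont_pt f x l : is_derive f x l -> continuity_pt f x.
Proof. intros H. apply derivable_continuous_pt. exists l. apply is_derive_Reals. exact H. Qed.

Lemma anti_derive f : (forall x, continuous f x) -> forall w, is_derive (Anti f) w (f w).
Proof.
  intros Hc w. unfold Anti. apply is_derive_RInt with (a := 0).
  - apply filter_forall. intro b. apply RInt_correct. apply ex_RInt_continuous. intros; apply Hc.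
  - apply Hc.
Qed.

Lemma anti0 f : Anti f 0 = 0.
Proof. unfold Anti. rewrite RInt_point. reflexivity. Qed.

Lemma mvt0 F f : (forall x, is_derive F x (f x)) -> forall w, exists th, Rabs th <= Rabs w /\ F w - F 0 = f th * w.
Proof.
  intros H w. destruct (MVT_gen F 0 w f) as [th [Hth Heq]].
  - intros; apply H.
  - intros; eapply is_derive_cont_pt; apply H.
  - exists th. split. unfold Rmin, Rmax in *. destruct (Rle_dec 0 w); split_Rabs; lra.
    rewrite Heq. ring.
Qed.

Lemma const_of_deriv0 F : (forall x, is_derive F x 0) -> forall x, F x = F 0.
Proof.
  intros H x. destruct (MVT_gen F 0 x (fun _ => 0)) as [th [_ Heq]].
  - intros; apply H.
  - intros; eapply is_derive_cont_pt; apply H.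
  - lra.
Qed.

Lemma lim_mult f g x (a b : R) : is_lim f x a -> is_lim g x b -> is_lim (fun y => f y * g y) x (a * b).
Proof. intros Ha Hb. apply (is_lim_mult f g x a b Ha Hb). exact I. Qed.

Lemma lim_zero_const (q : R) x : x = p_infty -> is_lim (fun _ => q) x 0 -> q = 0.
Proof.
  intros -> H. pose proof (is_lim_unique _ _ _ H) as H1.
  rewrite (is_lim_unique _ _ _ (is_lim_const q p_infty)) in H1. injection H1; auto.
Qed.

Lemma max_deriv0 g m l : is_derive g m l -> (forall x, g x <= g m) -> l = 0.
Proof.
  intros H Hm. destruct (Req_dec l 0) as [|Hl]; auto. exfalso.
  destruct (deriv_approx g m l H (Rabs l / 2)) as [d [Hd Hy]]. { apply Rabs_pos_lt in Hl; lra. }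
  destruct (Rle_dec 0 l) as [Hp|Hn].
  - specialize (Hy (m + d/2)). replace (m + d/2 - m) with (d/2) in Hy by ring.
    rewrite (Rabs_right (d/2)) in Hy by lra. specialize (Hy ltac:(lra)). specialize (Hm (m + d/2)).
    rewrite (Rabs_right l) in Hy by lra.
    apply Rabs_le_between in Hy. nra.
  - specialize (Hy (m - d/2)). replace (m - d/2 - m) with (-(d/2)) in Hy by ring.
    rewrite Rabs_Ropp, (Rabs_right (d/2)) in Hy by lra. specialize (Hy ltac:(lra)). specialize (Hm (m - d/2)).
    rewrite (Rabs_left l) in Hy by lra. apply Rabs_le_between in Hy. nra.
Qed.
Lemma shift_derive (V V' : R -> R) k : (forall z, is_derive V z (V' z)) -> forall y, Derive (fun y0 => V (y0 - k)) y = V' (y - k).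
Proof.
  intros HV y. apply is_derive_unique.
  pose proof (is_derive_comp V (fun y0 => y0 - k) y (V' (y-k)) 1 (HV _)) as H.
  assert (H1: is_derive (fun y0 : R => y0 - k) y 1) by (auto_derive; [exact I| ring]).
  specialize (H H1). simpl in H. unfold scal in H; simpl in H. unfold mult in H; simpl in H.
  rewrite Rmult_1_l in H. exact H.
Qed.
Lemma tshift_derive (V V' : R -> R) c x : (forall z, is_derive V z (V' z)) -> forall t, Derive (fun s => V (x - c * s)) t = - c * V' (x - c*t).
Proof.
  intros HV t. apply is_derive_unique.
  pose proof (is_derive_comp V (fun s => x - c * s) t (V' (x - c*t)) (-c) (HV _)) as H.
  assert (H1: is_derive (fun s : R => x - c * s) t (-c)) by (auto_derive; [exact I| ring]).
  specialize (H H1). unfold scal in H; simpl in H. unfold mult in H; simpl in H. exact H.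
Qed.

Definition Wf (U : R -> R) z := U z ^ 2 - Derive U z ^ 2.
Definition Mf (U : R -> R) z := U z - Derive (Derive U) z.
Definition Pf (f1 g1 U : R -> R) z := (U z * f1 (Wf U z) + g1 (Wf U z)) * Mf U z.

Lemma smooth_d (U : R -> R) : smooth U -> forall z, is_derive U z (Derive U z).
Proof. intros H z. apply Derive_correct. exact (H 1%nat z). Qed.
Lemma smooth_dd (U : R -> R) : smooth U -> forall z, is_derive (Derive U) z (Derive (Derive U) z).
Proof. intros H z. apply Derive_correct. exact (H 2%nat z). Qed.
Lemma smooth_ddd (U : R -> R) : smooth U -> forall z, is_derive (Derive (Derive U)) z (Derive (Derive (Derive U)) z).
Proof. intros H z. apply Derive_correct. exact (H 3%nat z). Qed.

Lemma reduce f1 g1 c U (HU: smooth U) (Hf: smooth f1) (Hg : smooth g1) :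
  solves_eq f1 g1 (fun t x => U (x - c*t)) ->
  forall x, -c * (Derive U x - Derive (Derive (Derive U)) x) + Derive U x * f1 (Wf U x) * Mf U x
     + Derive (Pf f1 g1 U) x = 0.
Proof.
  intros H x. unfold solves_eq in H. cbv zeta in H.
  assert (E1 : d_x (fun t x => U (x - c*t)) = fun t x => Derive U (x - c*t)).
  { apply functional_extensionality; intro t; apply functional_extensionality; intro y.
    unfold d_x. apply shift_derive. apply smooth_d; auto. }
  rewrite E1 in H.
  assert (E2 : d_x (fun t x => Derive U (x - c*t)) = fun t x => Derive (Derive U) (x - c*t)).
  { apply functional_extensionality; intro t; apply functional_extensionality; intro y.
    unfold d_x. apply shift_derive. apply smooth_dd; auto. }
  rewrite E2 in H.
  specialize (H 0 x).
  replace (x - c * 0) with x in H by ring.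
  assert (Et : d_t (fun t x => U (x - c * t) - Derive (Derive U) (x - c * t)) 0 x
     = -c * (Derive U x - Derive (Derive (Derive U)) x)).
  { unfold d_t. rewrite (Derive_ext _ (fun s => Mf U (x - c * s))).
    2:{ intro s. reflexivity. }
    rewrite (tshift_derive (Mf U) (fun z => Derive U z - Derive (Derive (Derive U)) z)).
    2:{ intro z. unfold Mf. apply @is_derive_minus. apply smooth_d; auto. apply smooth_ddd; auto. }
    replace (x - c * 0) with x by ring. reflexivity. }
  rewrite Et in H.
  assert (Ex : d_x (fun t' y => (U (y - c * t') * f1 (U (y - c * t') ^ 2 - Derive U (y - c * t') ^ 2) +
        g1 (U (y - c * t') ^ 2 - Derive U (y - c * t') ^ 2)) * (U (y - c * t') - Derive (Derive U) (y - c * t'))) 0 x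
     = Derive (Pf f1 g1 U) x).
  { unfold d_x. apply Derive_ext. intro y. unfold Pf, Mf, Wf. replace (y - c * 0) with y by ring. reflexivity. }
  rewrite Ex in H.
  unfold Mf, Wf. exact H.
Qed.

Ltac deta := repeat match goal with |- context [Derive (fun x => ?f x) ?y] => change (Derive (fun x => f x) y) with (Derive f y) end.

Ltac rinv := repeat match goal with |- context [RinvImpl.Rinv ?x] => change (RinvImpl.Rinv x) with (Rinv x) end.

Lemma contd (F : R -> R) x l : is_derive F x l -> continuous F x.
Proof. intros H. exact (ex_derive_continuous (K := R_AbsRing) (V := R_NormedModule) F x (ex_intro _ l H)). Qed.

Lemma lim_eq f x (a b : R) : is_lim f x a -> a = b -> is_lim f x b.
Proof. intros H <-; exact H. Qed.

Lemma dWf U : smooth U -> forall z, is_derive (Wf U) z (2 * Derive U z * Mf U z).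
Proof.
  intros HU z. unfold Wf, Mf. auto_derive.
  - split. exact (HU 1%nat z). split. exact (HU 2%nat z). exact I.
  - change (Derive (fun x => U x) z) with (Derive U z). change (Derive (fun x => Derive U x) z) with (Derive (Derive U) z). ring.
Qed.

Lemma dMf U : smooth U -> forall z, is_derive (Mf U) z (Derive U z - Derive (Derive (Derive U)) z).
Proof. intros HU z. unfold Mf. apply @is_derive_minus. apply smooth_d; auto. apply smooth_ddd; auto. Qed.

Lemma exPf f1 g1 U : smooth f1 -> smooth g1 -> smooth U -> forall z, ex_derive (Pf f1 g1 U) z.
Proof.
  intros Hf Hg HU z. unfold Pf, Mf, Wf. auto_derive.
  repeat split; try exact I; try exact (HU 1%nat _); try exact (HU 2%nat _); try exact (HU 3%nat _);
   try exact (Hf 1%nat _); try exact (Hg 1%nat _).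
Qed.

Lemma contf f : smooth f -> forall x, continuous f x.
Proof. intros H x. exact (ex_derive_continuous (K := R_AbsRing) (V := R_NormedModule) f x (H 1%nat x)). Qed.

Lemma first_integrals f1 g1 c U : smooth f1 -> smooth g1 -> smooth U ->
  is_lim U p_infty 0 -> is_lim (Derive U) p_infty 0 -> is_lim (Derive (Derive U)) p_infty 0 ->
  (forall x, -c * (Derive U x - Derive (Derive (Derive U)) x) + Derive U x * f1 (Wf U x) * Mf U x
     + Derive (Pf f1 g1 U) x = 0) ->
  forall z, U z * Anti f1 (Wf U z) + Anti g1 (Wf U z) - c * Wf U z = 0.
Proof.
  intros Hf Hg HU L0 L1 L2 ODE.
  assert (dF : forall w, is_derive (Anti f1) w (f1 w)) by (apply anti_derive, contf, Hf).
  assert (dG : forall w, is_derive (Anti g1) w (g1 w)) by (apply anti_derive, contf, Hg).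
  assert (LW : is_lim (Wf U) p_infty 0).
  { apply is_lim_ext with (f := fun z => U z * U z - Derive U z * Derive U z).
    { intro; unfold Wf; ring. }
    eapply lim_eq. apply is_lim_minus'; apply lim_mult; eassumption. ring. }
  assert (LM : is_lim (Mf U) p_infty 0).
  { change (is_lim (fun z => U z - Derive (Derive U) z) p_infty 0). eapply lim_eq. apply is_lim_minus'; eassumption. ring. }
  set (Q := fun z => (U z * f1 (Wf U z) + g1 (Wf U z) - c) * Mf U z + Anti f1 (Wf U z) / 2).
  assert (dQ : forall z, is_derive Q z 0).
  { intro z. apply is_derive_ext with (f := fun z => Pf f1 g1 U z - c * Mf U z + Anti f1 (Wf U z) / 2).
    { intro t. unfold Q, Pf. match goal with |- ?a = ?b => change (@eq R a b) end. ring. }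
    auto_derive.
    - repeat split; try exact I. apply exPf; auto. exists (Derive U z - Derive (Derive (Derive U)) z); apply dMf; auto.
      exists (f1 (Wf U z)); apply dF. exists (2 * Derive U z * Mf U z); apply dWf; auto.
    - deta. rewrite (is_derive_unique _ _ _ (dMf U HU z)), (is_derive_unique _ _ _ (dWf U HU z)),
        (is_derive_unique _ _ _ (dF _)).
      change (Derive (fun x => Pf f1 g1 U x) z) with (Derive (Pf f1 g1 U) z).
      match goal with |- ?a = ?b => change (@eq R a b) end.
      transitivity (-c * (Derive U z - Derive (Derive (Derive U)) z) + Derive U z * f1 (Wf U z) * Mf U z
     + Derive (Pf f1 g1 U) z). unfold Wf, Mf. field. apply ODE. }
  assert (Qz : forall z, Q z = 0).
  { intro z. rewrite (const_of_deriv0 Q dQ z). apply (lim_zero_const _ p_infty eq_refl).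
    apply is_lim_ext with (f := Q). { intro; apply (const_of_deriv0 Q dQ). }
    unfold Q. eapply lim_eq. apply is_lim_plus'. apply lim_mult. apply is_lim_minus'. apply is_lim_plus'.
    apply lim_mult. exact L0. apply (is_lim_comp_continuous (Wf U) f1). exact LW. apply contf; auto.
    apply (is_lim_comp_continuous (Wf U) g1). exact LW. apply contf; auto.
    apply is_lim_const. exact LM.
    apply lim_mult. apply (is_lim_comp_continuous (Wf U) (Anti f1)). exact LW.
    apply (contd _ _ _ (dF 0)). apply is_lim_const.
    rewrite anti0. ring. }
  set (E := fun z => U z * Anti f1 (Wf U z) + Anti g1 (Wf U z) - c * Wf U z).
  assert (dE : forall z, is_derive E z 0).
  { intro z. unfold E. auto_derive.
    - repeat split; try exact I. exact (HU 1%nat z). exists (f1 (Wf U z)); apply dF.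
      exists (2 * Derive U z * Mf U z); apply dWf; auto. exists (g1 (Wf U z)); apply dG.
      exists (2 * Derive U z * Mf U z); apply dWf; auto. exists (2 * Derive U z * Mf U z); apply dWf; auto.
    - deta. rewrite (is_derive_unique _ _ _ (dWf U HU z)),
        (is_derive_unique _ _ _ (dF _)), (is_derive_unique _ _ _ (dG _)).
      match goal with |- ?a = ?b => change (@eq R a b) end. transitivity (2 * Derive U z * Q z). unfold Q, Wf, Mf; field. rewrite Qz; ring. }
  intro z. change (E z = 0). rewrite (const_of_deriv0 E dE z). apply (lim_zero_const _ p_infty eq_refl).
  apply is_lim_ext with (f := E). { intro; apply (const_of_deriv0 E dE). }
  unfold E. eapply lim_eq. apply is_lim_minus'. apply is_lim_plus'.
  apply lim_mult. exact L0. apply (is_lim_comp_continuous (Wf U) (Anti f1)). exact LW.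
  apply (contd _ _ _ (dF 0)).
  apply (is_lim_comp_continuous (Wf U) (Anti g1)). exact LW.
  apply (contd _ _ _ (dG 0)).
  apply lim_mult. apply is_lim_const. exact LW.
  rewrite anti0, anti0. ring.
Qed.

Lemma lip f x l : is_derive f x l -> exists d L, 0 < d /\ 0 <= L /\
  forall y, Rabs (y - x) < d -> Rabs (f y - f x) <= L * Rabs (y - x).
Proof.
  intros H. destruct (deriv_approx f x l H 1 Rlt_0_1) as [d [Hd Hy]].
  exists d, (Rabs l + 1). split; auto. split. pose proof (Rabs_pos l); lra.
  intros y Hyd. specialize (Hy y Hyd).
  replace (f y - f x) with ((f y - f x - l * (y - x)) + l * (y - x)) by ring.
  eapply Rle_trans. apply Rabs_triang. rewrite Rabs_mult. lra.
Qed.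

Lemma keyb f1 g1 c U L1 L2 d1 d2 :
  (forall w, is_derive (Anti f1) w (f1 w)) -> (forall w, is_derive (Anti g1) w (g1 w)) ->
  (forall y, Rabs (y - 0) < d1 -> Rabs (f1 y - f1 0) <= L1 * Rabs (y - 0)) ->
  (forall y, Rabs (y - 0) < d2 -> Rabs (g1 y - g1 0) <= L2 * Rabs (y - 0)) ->
  0 <= L1 -> 0 <= L2 ->
  (forall z, U z * Anti f1 (Wf U z) + Anti g1 (Wf U z) - c * Wf U z = 0) ->
  forall z, Wf U z <> 0 -> Rabs (Wf U z) < d1 -> Rabs (Wf U z) < d2 ->
  Rabs (U z * f1 0 + g1 0 - c) <= (Rabs (U z) * L1 + L2) * Rabs (Wf U z).
Proof.
  intros dF dG H1 H2 HL1 HL2 E z Hw Hd1 Hd2.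
  destruct (mvt0 _ _ dF (Wf U z)) as [t1 [Ht1 Eq1]].
  destruct (mvt0 _ _ dG (Wf U z)) as [t2 [Ht2 Eq2]].
  rewrite anti0 in Eq1, Eq2.
  assert (Hz : Wf U z * (U z * f1 t1 + g1 t2 - c) = 0).
  { rewrite <- (E z). replace (Anti f1 (Wf U z)) with (f1 t1 * Wf U z) by lra.
    replace (Anti g1 (Wf U z)) with (g1 t2 * Wf U z) by lra. ring. }
  apply Rmult_integral in Hz. destruct Hz as [Hz|Hz]; [contradiction|].
  replace (U z * f1 0 + g1 0 - c) with (- (U z * (f1 t1 - f1 0) + (g1 t2 - g1 0))) by lra.
  rewrite Rabs_Ropp. eapply Rle_trans. apply Rabs_triang. rewrite Rabs_mult.
  assert (A1 : Rabs (f1 t1 - f1 0) <= L1 * Rabs (Wf U z)).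
  { eapply Rle_trans. apply H1. rewrite Rminus_0_r; lra. rewrite Rminus_0_r.
    apply Rmult_le_compat_l; lra. }
  assert (A2 : Rabs (g1 t2 - g1 0) <= L2 * Rabs (Wf U z)).
  { eapply Rle_trans. apply H2. rewrite Rminus_0_r; lra. rewrite Rminus_0_r.
    apply Rmult_le_compat_l; lra. }
  pose proof (Rabs_pos (U z)).
  assert (Rabs (U z) * Rabs (f1 t1 - f1 0) <= Rabs (U z) * (L1 * Rabs (Wf U z))) by (apply Rmult_le_compat_l; lra).
  nra.
Qed.

Lemma lim_pinf U : is_lim U p_infty 0 -> forall e, 0 < e -> exists M, forall x, M < x -> Rabs (U x) < e.
Proof.
  intros H e He. apply is_lim_spec in H. destruct (H (mkposreal e He)) as [M HM].
  exists M. intros x Hx. specialize (HM x Hx). simpl in HM. rewrite Rminus_0_r in HM. exact HM.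
Qed.

Lemma lim_minf U : is_lim U m_infty 0 -> forall e, 0 < e -> exists M, forall x, x < M -> Rabs (U x) < e.
Proof.
  intros H e He. apply is_lim_spec in H. destruct (H (mkposreal e He)) as [M HM].
  exists M. intros x Hx. specialize (HM x Hx). simpl in HM. rewrite Rminus_0_r in HM. exact HM.
Qed.

Lemma Wf_bound U z r : Rabs (U z) < r -> Rabs (Derive U z) < r -> r <= 1 -> Rabs (Wf U z) < 2 * r.
Proof.
  intros H1 H2 H3. unfold Wf. pose proof (Rabs_pos (U z)). pose proof (Rabs_pos (Derive U z)).
  assert (U z ^ 2 = Rabs (U z) * Rabs (U z)) by (rewrite <- Rabs_mult; simpl; rewrite Rmult_1_r; rewrite Rabs_right; [ring| nra]).
  assert (Derive U z ^ 2 = Rabs (Derive U z) * Rabs (Derive U z)) by (rewrite <- Rabs_mult; simpl; rewrite Rmult_1_r; rewrite Rabs_right; [ring| nra]).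
  split_Rabs; nra.
Qed.

Lemma sq_lt a b : Rabs a < Rabs b -> a * a < b * b.
Proof. intros H. split_Rabs; nra. Qed.

Lemma max_point U : smooth U -> (exists xi, U xi <> 0) -> is_lim U p_infty 0 -> is_lim U m_infty 0 ->
  exists m, Wf U m <> 0.
Proof.
  intros HU [x0 Hx0] Lp Lm.
  assert (He : 0 < Rabs (U x0)) by (apply Rabs_pos_lt; auto).
  destruct (lim_pinf U Lp _ He) as [M1 HM1]. destruct (lim_minf U Lm _ He) as [M2 HM2].
  set (A := Rmin M2 x0). set (B := Rmax M1 x0).
  assert (HAB : A <= B) by (unfold A, B, Rmin, Rmax; destruct (Rle_dec M2 x0); destruct (Rle_dec M1 x0); lra).
  destruct (continuity_ab_maj (fun x => U x * U x) A B HAB) as [m [Hm Hmab]].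
  { intros x _. eapply is_derive_cont_pt. apply (is_derive_mult (K := R_AbsRing)); try apply smooth_d; auto.
    intros; apply Rmult_comm. }
  assert (Hx0ab : A <= x0 <= B) by (unfold A, B, Rmin, Rmax; destruct (Rle_dec M2 x0); destruct (Rle_dec M1 x0); lra).
  assert (Hglob : forall x, U x * U x <= U m * U m).
  { intro x. destruct (Rle_dec A x); destruct (Rle_dec x B).
    - apply Hm; lra.
    - assert (Rabs (U x) < Rabs (U x0)) by (apply HM1; unfold B, Rmax in *; destruct (Rle_dec M1 x0); lra).
      specialize (Hm x0 Hx0ab). apply sq_lt in H. lra.
    - assert (Rabs (U x) < Rabs (U x0)) by (apply HM2; unfold A, Rmin in *; destruct (Rle_dec M2 x0); lra).
      specialize (Hm x0 Hx0ab). apply sq_lt in H. lra.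
    - lra. }
  assert (Hd : is_derive (fun x => U x * U x) m (2 * U m * Derive U m)).
  { eapply is_derive_ext. intro; reflexivity.
    pose proof (is_derive_mult (K := R_AbsRing) U U m (Derive U m) (Derive U m) (smooth_d U HU m) (smooth_d U HU m) ltac:(intros; apply Rmult_comm)) as K.
    replace (2 * U m * Derive U m) with (plus (mult (Derive U m) (U m)) (mult (U m) (Derive U m))).
    exact K. unfold plus, mult; simpl. ring. }
  pose proof (max_deriv0 _ _ _ Hd Hglob) as H0.
  exists m. unfold Wf.
  assert (U m * U m > 0). { specialize (Hglob x0). assert (U x0 * U x0 > 0). { destruct (Rlt_or_le (U x0) 0) as [h|h]. nra. destruct h as [h|h]. nra. congruence. } nra. }
  assert (Derive U m = 0). { assert (U m <> 0) by (intro E; rewrite E in *; lra). 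
    apply Rmult_integral in H0. destruct H0 as [H0|H0]; [|auto]. apply Rmult_integral in H0; destruct H0; lra. }
  rewrite H1. simpl. nra.
Qed.

Lemma eventually_zero f1 g1 c U : smooth f1 -> smooth g1 -> c <> g1 0 ->
  is_lim U p_infty 0 -> is_lim (Derive U) p_infty 0 ->
  (forall z, U z * Anti f1 (Wf U z) + Anti g1 (Wf U z) - c * Wf U z = 0) ->
  exists R0, forall z, R0 < z -> Wf U z = 0.
Proof.
  intros Hf Hg Hc L0 L1 E.
  assert (dF : forall w, is_derive (Anti f1) w (f1 w)) by (apply anti_derive, contf, Hf).
  assert (dG : forall w, is_derive (Anti g1) w (g1 w)) by (apply anti_derive, contf, Hg).
  destruct (lip f1 0 _ (smooth_d f1 Hf 0)) as [d1 [K1 [Hd1 [HK1 Hl1]]]].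
  destruct (lip g1 0 _ (smooth_d g1 Hg 0)) as [d2 [K2 [Hd2 [HK2 Hl2]]]].
  set (D := Rabs (g1 0 - c)).
  assert (HD : 0 < D) by (apply Rabs_pos_lt; intro; apply Hc; lra).
  set (K0 := Rabs (f1 0) + 2 * K1 + 2 * K2 + 1).
  assert (HK0 : 0 < K0) by (unfold K0; pose proof (Rabs_pos (f1 0)); lra).
  set (r := Rmin 1 (Rmin (d1/2) (Rmin (d2/2) (D/(2*K0))))).
  assert (Hr0 : 0 < r).
  { unfold r. repeat apply Rmin_glb_lt; try lra. apply Rdiv_lt_0_compat; lra. }
  assert (Hr1 : r <= 1) by apply Rmin_l.
  assert (Hr2 : r <= d1/2) by (eapply Rle_trans; [apply Rmin_r|apply Rmin_l]).
  assert (Hr3 : r <= d2/2) by (eapply Rle_trans; [apply Rmin_r|]; eapply Rle_trans; [apply Rmin_r|apply Rmin_l]).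
  assert (Hr4 : r <= D/(2*K0)) by (eapply Rle_trans; [apply Rmin_r|]; eapply Rle_trans; [apply Rmin_r|]; apply Rmin_r).
  assert (Hr4' : r * K0 <= D / 2).
  { apply Rmult_le_compat_r with (r := K0) in Hr4; [|lra].
    replace (D / (2 * K0) * K0) with (D/2) in Hr4 by (field; lra). exact Hr4. }
  destruct (lim_pinf U L0 r Hr0) as [M1 HM1].
  destruct (lim_pinf (Derive U) L1 r Hr0) as [M2 HM2].
  exists (Rmax M1 M2). intros z Hz.
  destruct (Req_dec (Wf U z) 0) as [|Hw]; auto. exfalso.
  assert (Hu : Rabs (U z) < r) by (apply HM1; eapply Rle_lt_trans; [apply Rmax_l|exact Hz]).
  assert (Hu1 : Rabs (Derive U z) < r) by (apply HM2; eapply Rle_lt_trans; [apply Rmax_r|exact Hz]).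
  pose proof (Wf_bound U z r Hu Hu1 Hr1) as HW.
  pose proof (keyb f1 g1 c U K1 K2 d1 d2 dF dG Hl1 Hl2 HK1 HK2 E z Hw ltac:(lra) ltac:(lra)) as Hk.
  pose proof (Rabs_pos (U z)). pose proof (Rabs_pos (Wf U z)).
  assert (B1 : (Rabs (U z) * K1 + K2) * Rabs (Wf U z) <= (K1 + K2) * (2 * r)).
  { apply Rmult_le_compat; nra. }
  assert (B2 : D <= Rabs (U z * f1 0 + g1 0 - c) + Rabs (U z) * Rabs (f1 0)).
  { unfold D. rewrite <- Rabs_mult. replace (g1 0 - c) with ((U z * f1 0 + g1 0 - c) + - (U z * f1 0)) by ring.
    eapply Rle_trans. apply Rabs_triang. rewrite Rabs_Ropp. lra. }
  assert (B3 : Rabs (U z) * Rabs (f1 0) <= r * Rabs (f1 0)) by (apply Rmult_le_compat_r; [apply Rabs_pos|lra]).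
  unfold K0 in Hr4'. nra.
Qed.

Lemma no_wave f1 g1 c U : smooth f1 -> smooth g1 -> smooth U -> c <> g1 0 -> (exists xi, U xi <> 0) ->
  is_lim U p_infty 0 -> is_lim (Derive U) p_infty 0 -> is_lim U m_infty 0 ->
  (forall z, U z * Anti f1 (Wf U z) + Anti g1 (Wf U z) - c * Wf U z = 0) -> False.
Proof.
  intros Hf Hg HU Hc Hne L0 L1 Lm E.
  assert (dF : forall w, is_derive (Anti f1) w (f1 w)) by (apply anti_derive, contf, Hf).
  assert (dG : forall w, is_derive (Anti g1) w (g1 w)) by (apply anti_derive, contf, Hg).
  destruct (eventually_zero f1 g1 c U Hf Hg Hc L0 L1 E) as [R0 HR0].
  destruct (max_point U HU Hne L0 Lm) as [m Hm].
  set (S := fun x => Wf U x <> 0).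
  assert (Hb : bound S).
  { exists R0. intros x Hx. destruct (Rle_dec x R0); auto. exfalso. apply Hx, HR0. lra. }
  destruct (completeness S Hb (ex_intro _ m Hm)) as [a [Hub Hlub]].
  assert (Hright : forall x, a < x -> Wf U x = 0).
  { intros x Hx. destruct (Req_dec (Wf U x) 0) as [|Hw]; auto. specialize (Hub x Hw). lra. }
  set (l := 2 * Derive U a * Mf U a).
  pose proof (dWf U HU a) as dWa. fold l in dWa.
  assert (Wa0 : Wf U a = 0).
  { destruct (Req_dec (Wf U a) 0) as [|Hw]; auto. exfalso.
    destruct (deriv_approx _ _ _ dWa 1 Rlt_0_1) as [d [Hd Hy]].
    assert (HP : 0 < Rabs (Wf U a)) by (apply Rabs_pos_lt; auto).
    assert (HL : 0 < Rabs l + 1) by (pose proof (Rabs_pos l); lra).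
    set (h := Rmin (d/2) (Rabs (Wf U a) / (2 * (Rabs l + 1)))).
    assert (Hh : 0 < h) by (apply Rmin_glb_lt; [lra| apply Rdiv_lt_0_compat; lra]).
    assert (Hh1 : h <= d/2) by apply Rmin_l.
    assert (Hh2 : h * (2 * (Rabs l + 1)) <= Rabs (Wf U a)).
    { pose proof (Rmin_r (d/2) (Rabs (Wf U a) / (2 * (Rabs l + 1)))) as X. fold h in X.
      apply Rmult_le_compat_r with (r := 2 * (Rabs l + 1)) in X; [|lra].
      replace (Rabs (Wf U a) / (2 * (Rabs l + 1)) * (2 * (Rabs l + 1))) with (Rabs (Wf U a)) in X by (field; lra). exact X. }
    specialize (Hy (a + h)). replace (a + h - a) with h in Hy by ring.
    rewrite (Rabs_right h) in Hy by lra. specialize (Hy ltac:(lra)).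
    rewrite (Hright (a + h)) in Hy by lra.
    assert (X : Rabs (Wf U a) <= Rabs (0 - Wf U a - l * h) + Rabs l * h).
    { replace (Wf U a) with (-(0 - Wf U a - l * h) + - (l * h)) at 1 by ring.
      eapply Rle_trans. apply Rabs_triang. rewrite !Rabs_Ropp, Rabs_mult, (Rabs_right h) by lra. lra. }
    nra. }
  assert (l0 : l = 0).
  { destruct (Req_dec l 0) as [|Hl]; auto. exfalso.
    assert (HP : 0 < Rabs l) by (apply Rabs_pos_lt; auto).
    destruct (deriv_approx _ _ _ dWa (Rabs l / 2) ltac:(lra)) as [d [Hd Hy]].
    specialize (Hy (a + d/2)). replace (a + d/2 - a) with (d/2) in Hy by ring.
    rewrite (Rabs_right (d/2)) in Hy by lra. specialize (Hy ltac:(lra)).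
    rewrite (Hright (a + d/2)), Wa0 in Hy by lra.
    replace (0 - 0 - l * (d/2)) with (- (l * (d/2))) in Hy by ring.
    rewrite Rabs_Ropp, Rabs_mult, (Rabs_right (d/2)) in Hy by lra. nra. }
  assert (Hleft : forall r, 0 < r -> exists x, a - r < x < a /\ Wf U x <> 0).
  { intros r Hr. apply NNPP. intro Hn.
    assert (Hub' : is_upper_bound S (a - r)).
    { intros x Hx. destruct (Rle_dec x (a - r)) as [|Hx']; auto. exfalso. apply Hn. exists x.
      assert (x <= a) by (apply Hub; auto).
      destruct (Req_dec x a) as [->|]. contradiction. split; [lra|exact Hx]. }
    specialize (Hlub _ Hub'). lra. }
  assert (Wapp : forall e, 0 < e -> exists d, 0 < d /\ forall y, Rabs (y - a) < d -> Rabs (Wf U y) <= e * Rabs (y - a)).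
  { intros e He. destruct (deriv_approx _ _ _ dWa e He) as [d [Hd Hy]]. exists d. split; auto.
    intros y Hy'. specialize (Hy y Hy'). rewrite Wa0, l0 in Hy.
    replace (Wf U y - 0 - 0 * (y - a)) with (Wf U y) in Hy by ring. exact Hy. }
  destruct (lip f1 0 _ (smooth_d f1 Hf 0)) as [d1 [K1 [Hd1 [HK1 Hl1]]]].
  destruct (lip g1 0 _ (smooth_d g1 Hg 0)) as [d2 [K2 [Hd2 [HK2 Hl2]]]].
  set (dd := Rmin d1 d2).
  assert (Hdd : 0 < dd) by (apply Rmin_glb_lt; lra).
  assert (Hdd1 : dd <= d1) by apply Rmin_l. assert (Hdd2 : dd <= d2) by apply Rmin_r.
  destruct (deriv_approx U a (Derive U a) (smooth_d U HU a) 1 Rlt_0_1) as [dU [HdU HUa]].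
  set (Ub := Rabs (U a) + Rabs (Derive U a) + 1).
  set (K := Ub * K1 + K2 + 1).
  assert (HUb : 0 < Ub) by (unfold Ub; pose proof (Rabs_pos (U a)); pose proof (Rabs_pos (Derive U a)); lra).
  assert (HK : 0 < K) by (unfold K; nra).
  assert (UL : forall y, Rabs (y - a) < dU -> Rabs (U y - U a) <= (Rabs (Derive U a) + 1) * Rabs (y - a)).
  { intros y Hy. specialize (HUa y Hy).
    replace (U y - U a) with ((U y - U a - Derive U a * (y - a)) + Derive U a * (y - a)) by ring.
    eapply Rle_trans. apply Rabs_triang. rewrite Rabs_mult. lra. }
  assert (KB : forall y, Rabs (y - a) < Rmin dU 1 -> Wf U y <> 0 -> Rabs (Wf U y) < dd ->
     Rabs (U y * f1 0 + g1 0 - c) <= K * Rabs (Wf U y)).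
  { intros y Hy Hw Hwd.
    assert (Hy1 : Rabs (y - a) < dU) by (eapply Rlt_le_trans; [exact Hy| apply Rmin_l]).
    assert (Hy2 : Rabs (y - a) < 1) by (eapply Rlt_le_trans; [exact Hy| apply Rmin_r]).
    pose proof (keyb f1 g1 c U K1 K2 d1 d2 dF dG Hl1 Hl2 HK1 HK2 E y Hw ltac:(lra) ltac:(lra)) as Hk.
    assert (HUy : Rabs (U y) <= Ub).
    { specialize (UL y Hy1). replace (U y) with (U a + (U y - U a)) by ring.
      eapply Rle_trans. apply Rabs_triang. pose proof (Rabs_pos (y - a)). pose proof (Rabs_pos (Derive U a)).
      assert (Z1 : (Rabs (Derive U a) + 1) * Rabs (y - a) <= (Rabs (Derive U a) + 1) * 1) by (apply Rmult_le_compat_l; lra).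
      unfold Ub. lra. }
    pose proof (Rabs_pos (Wf U y)). pose proof (Rabs_pos (U y)).
    eapply Rle_trans. exact Hk. apply Rmult_le_compat_r; [lra|].
    assert (Z2 : Rabs (U y) * K1 <= Ub * K1) by (apply Rmult_le_compat_r; lra). unfold K. lra. }
  assert (Psia : U a * f1 0 + g1 0 - c = 0).
  { destruct (Req_dec (U a * f1 0 + g1 0 - c) 0) as [|HP]; auto. exfalso.
    set (P := Rabs (U a * f1 0 + g1 0 - c)).
    assert (HP' : 0 < P) by (apply Rabs_pos_lt; auto).
    destruct (Wapp 1 Rlt_0_1) as [dW1 [HdW1 HW1]].
    set (C := K + Rabs (f1 0) * (Rabs (Derive U a) + 1)).
    assert (HC : 0 < C) by (unfold C; pose proof (Rabs_pos (f1 0)); pose proof (Rabs_pos (Derive U a)); nra).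
    set (r := Rmin (Rmin (Rmin dU 1) dW1) (Rmin dd (P / (2 * C)))).
    assert (Hr : 0 < r).
    { unfold r. repeat apply Rmin_glb_lt; try lra. apply Rdiv_lt_0_compat; lra. }
    assert (Hr1 : r <= Rmin dU 1) by (eapply Rle_trans; apply Rmin_l).
    assert (Hr2 : r <= dW1) by (eapply Rle_trans; [apply Rmin_l| apply Rmin_r]).
    assert (Hr3 : r <= dd) by (eapply Rle_trans; [apply Rmin_r| apply Rmin_l]).
    assert (Hr4 : r <= P / (2 * C)) by (eapply Rle_trans; [apply Rmin_r| apply Rmin_r]).
    assert (Hr5 : r * C <= P / 2).
    { apply Rmult_le_compat_r with (r := C) in Hr4; [|lra].
      replace (P / (2 * C) * C) with (P / 2) in Hr4 by (field; lra). exact Hr4. }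
    destruct (Hleft r Hr) as [y [Hy Hwy]].
    assert (Hya : Rabs (y - a) < r) by (rewrite Rabs_left by lra; lra).
    assert (HRm1 : Rmin dU 1 <= dU) by apply Rmin_l.
    specialize (HW1 y ltac:(lra)).
    assert (Hk : Rabs (U y * f1 0 + g1 0 - c) <= K * Rabs (Wf U y)) by (apply KB; auto; lra).
    specialize (UL y ltac:(lra)).
    assert (X : P <= Rabs (U y * f1 0 + g1 0 - c) + Rabs (f1 0) * Rabs (U y - U a)).
    { unfold P. rewrite <- Rabs_mult.
      replace (U a * f1 0 + g1 0 - c) with ((U y * f1 0 + g1 0 - c) + - (f1 0 * (U y - U a))) by ring.
      eapply Rle_trans. apply Rabs_triang. rewrite Rabs_Ropp. lra. }
    pose proof (Rabs_pos (f1 0)). pose proof (Rabs_pos (y - a)).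
    assert (X2 : Rabs (f1 0) * Rabs (U y - U a) <= Rabs (f1 0) * ((Rabs (Derive U a) + 1) * Rabs (y - a)))
      by (apply Rmult_le_compat_l; lra).
    assert (X3 : K * Rabs (Wf U y) <= K * Rabs (y - a)) by (apply Rmult_le_compat_l; lra).
    assert (X4 : C * Rabs (y - a) < C * r) by (apply Rmult_lt_compat_l; lra).
    assert (X5 : C * Rabs (y - a) = K * Rabs (y - a) + Rabs (f1 0) * ((Rabs (Derive U a) + 1) * Rabs (y - a))) by (unfold C; ring).
    assert (X6 : C * r = r * C) by ring.
    lra. }
  assert (Hf0 : f1 0 <> 0) by (intro H0; rewrite H0 in Psia; apply Hc; lra).
  assert (Hua : U a <> 0) by (intro H0; rewrite H0 in Psia; apply Hc; lra).
  assert (Hu1a : Derive U a <> 0).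
  { intro H0. unfold Wf in Wa0. rewrite H0 in Wa0. apply Hua. simpl in Wa0. nra. }
  set (p := Derive U a * f1 0).
  assert (Hp : 0 < Rabs p) by (apply Rabs_pos_lt; unfold p; apply Rmult_integral_contrapositive; auto).
  assert (Hq : 0 < Rabs (Derive U a)) by (apply Rabs_pos_lt; auto).
  destruct (deriv_approx U a (Derive U a) (smooth_d U HU a) (Rabs (Derive U a) / 2) ltac:(lra)) as [dU' [HdU' HU']].
  set (e := Rabs p / (4 * K)).
  assert (He : 0 < e) by (apply Rdiv_lt_0_compat; lra).
  destruct (Wapp e He) as [dWe [HdWe HWe]].
  destruct (Wapp 1 Rlt_0_1) as [dW1 [HdW1 HW1]].
  set (r := Rmin (Rmin (Rmin dU 1) dU') (Rmin (Rmin dWe dW1) dd)).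
  assert (Hr : 0 < r) by (unfold r; repeat apply Rmin_glb_lt; lra).
  assert (Hr1 : r <= Rmin dU 1) by (eapply Rle_trans; apply Rmin_l).
  assert (Hr2 : r <= dU') by (eapply Rle_trans; [apply Rmin_l| apply Rmin_r]).
  assert (Hr3 : r <= dWe) by (eapply Rle_trans; [apply Rmin_r| eapply Rle_trans; apply Rmin_l]).
  assert (Hr4 : r <= dW1) by (eapply Rle_trans; [apply Rmin_r| eapply Rle_trans; [apply Rmin_l| apply Rmin_r]]).
  assert (Hr5 : r <= dd) by (eapply Rle_trans; [apply Rmin_r| apply Rmin_r]).
  destruct (Hleft r Hr) as [y [Hy Hwy]].
  assert (Hya : Rabs (y - a) < r) by (rewrite Rabs_left by lra; lra).
  assert (Hya0 : 0 < Rabs (y - a)) by (apply Rabs_pos_lt; lra).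
  specialize (HW1 y ltac:(lra)). specialize (HWe y ltac:(lra)). specialize (HU' y ltac:(lra)).
  assert (Hk : Rabs (U y * f1 0 + g1 0 - c) <= K * Rabs (Wf U y)) by (apply KB; auto; lra).
  assert (Eq : U y * f1 0 + g1 0 - c = f1 0 * (U y - U a)) by lra.
  rewrite Eq, Rabs_mult in Hk.
  assert (Low : Rabs (Derive U a) * Rabs (y - a) / 2 <= Rabs (U y - U a)).
  { assert (Z : Rabs (Derive U a * (y - a)) <= Rabs (U y - U a - Derive U a * (y - a)) + Rabs (U y - U a)).
    { replace (Derive U a * (y - a)) with (- (U y - U a - Derive U a * (y - a)) + (U y - U a)) at 1 by ring.
      eapply Rle_trans. apply Rabs_triang. rewrite Rabs_Ropp. lra. }
    rewrite Rabs_mult in Z. lra. }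
  assert (Hpe : Rabs p = Rabs (Derive U a) * Rabs (f1 0)) by (unfold p; apply Rabs_mult).
  assert (Hf0' : 0 < Rabs (f1 0)) by (apply Rabs_pos_lt; auto).
  assert (Y1 : Rabs (f1 0) * (Rabs (Derive U a) * Rabs (y - a) / 2) <= Rabs (f1 0) * Rabs (U y - U a))
    by (apply Rmult_le_compat_l; lra).
  assert (Y2 : K * Rabs (Wf U y) <= K * (e * Rabs (y - a))) by (apply Rmult_le_compat_l; lra).
  assert (Y3 : K * e = Rabs p / 4) by (unfold e; field; lra).
  assert (Y4 : 0 < Rabs p * Rabs (y - a)) by (apply Rmult_lt_0_compat; lra).
  assert (Y5 : K * (e * Rabs (y - a)) = Rabs p * Rabs (y - a) / 4) by (rewrite <- Rmult_assoc, Y3; field).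
  assert (Y6 : Rabs (f1 0) * (Rabs (Derive U a) * Rabs (y - a) / 2) = Rabs p * Rabs (y - a) / 2) by (rewrite Hpe; field).
  lra.
Qed.

Theorem proposition1 (f1 g1 : R -> R) (Hf1 : smooth f1) (Hg1 : smooth g1) :
  (forall c : R, c <> 0 -> c <> g1 0 ->
     ~ exists U : R -> R, smooth_solitary_tw f1 g1 c U) /\
  (g1 0 = 0 ->
     forall c : R, c <> 0 -> ~ exists U : R -> R, smooth_solitary_tw f1 g1 c U).
Proof.
  assert (H : forall c, c <> g1 0 -> ~ exists U, smooth_solitary_tw f1 g1 c U).
  { intros c Hc [U [HU [Hne [Hlim Hsol]]]].
    pose proof (reduce f1 g1 c U HU Hf1 Hg1 Hsol) as ODE.
    destruct (Hlim 0%nat) as [L0 Lm]. destruct (Hlim 1%nat) as [L1 _]. destruct (Hlim 2%nat) as [L2 _].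
    assert (L0' : is_lim U p_infty 0) by (apply is_lim_ext with (f := Derive_n U 0); [intro; reflexivity| exact L0]).
    assert (Lm' : is_lim U m_infty 0) by (apply is_lim_ext with (f := Derive_n U 0); [intro; reflexivity| exact Lm]).
    assert (L1' : is_lim (Derive U) p_infty 0) by (apply is_lim_ext with (f := Derive_n U 1); [intro; reflexivity| exact L1]).
    assert (L2' : is_lim (Derive (Derive U)) p_infty 0) by (apply is_lim_ext with (f := Derive_n U 2); [intro; reflexivity| exact L2]).
    exact (no_wave f1 g1 c U Hf1 Hg1 HU Hc Hne L0' L1' Lm' (first_integrals f1 g1 c U Hf1 Hg1 HU L0' L1' L2' ODE)). }
  split.
  - intros c _ Hc. apply H; auto.
  - intros Hg0 c Hc. apply H. rewrite Hg0. auto.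
Qed.
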